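(* Let $n\ge 2$ and $\ell\ge 2$ be integers, let $G=\mathbb{Z}_{\ell^n-(\ell-1)^n}$, and let $\alpha=\ell(\ell-1)^{-1}\in G$. Let $L=(\ell,\ell,\dots,\ell)\in\mathbb{Z}^n$ and $K=(\ell-1,\ell-1,\dots,\ell-1)\in\mathbb{Z}^n$. Then $\mathcal{S}_{L,K}$ splits $G$ with the splitting sequence $\beta=\beta_1,\dots,\beta_n$ defined by $\beta_i=\alpha^{i-1}$, $1\le i\le n$.
   Context: $\mathbb{Z}_m$ is the ring of integers modulo $m$ (here $\ell-1$ is invertible in it). For integer vectors $L,K$ with $0<k_i<\ell_i$, the discrete $n$-dimensional chair is $\mathcal{S}_{L,K}=\{(x_1,\dots,x_n)\in\mathbb{Z}^n: 0\le x_i<\ell_i \text{ for all } i, \text{ and there exists } j \text{ with } x_j<\ell_j-k_j\}$. For an Abelian group $G$, a sequence $\beta=\beta_1,\dots,\beta_n$ in $G$ and $X\in\mathbb{Z}^n$, $X\cdot\beta=\sum_i x_i\beta_i$. A finite set $\mathcal{S}\subset\mathbb{Z}^n$ splits $G$ with splitting sequence $\beta$ if $\{\mathcal{E}\cdot\beta:\mathcal{E}\in\mathcal{S}\}$ consists of $|\mathcal{S}|$ distinct elements of $G$. *)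

(* Defs.v *)
From mathcomp Require Import all_boot all_order all_algebra.
Set Implicit Arguments. Unset Strict Implicit. Unset Printing Implicit Defensive.
Import GRing.Theory.
Local Open Scope ring_scope.

Definition chair (n : nat) (L K : 'I_n -> int) (X : 'I_n -> int) : Prop :=
  (forall i, 0 <= X i < L i) /\ (exists j, X j < L j - K j).

Definition dotG (G : zmodType) (n : nat) (X : 'I_n -> int) (beta : 'I_n -> G) : G :=
  \sum_(i < n) beta i *~ X i.

Definition splits (G : zmodType) (n : nat) (S : ('I_n -> int) -> Prop)
    (beta : 'I_n -> G) : Prop :=
  forall X Y, S X -> S Y -> dotG X beta = dotG Y beta -> forall i, X i = Y i.

(* Main.v *)
Require Import Defs.
From mathcomp Require Import all_boot all_order all_algebra.
From mathcomp Require Import ring zify lra.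
Import Order.TTheory GRing.Theory Num.Theory.
Local Open Scope ring_scope.

Lemma per_mul (A : nat -> int) n : (forall t, A (t + n)%N = A t) ->
  forall k x, A (x + k * n)%N = A x.
Proof.
move=> per; elim=> [|k IH] x; first by rewrite mul0n addn0.
by rewrite mulSn addnA IH per.
Qed.

Lemma per_mod (A : nat -> int) n : (forall t, A (t + n)%N = A t) ->
  forall t, A t = A (t %% n)%N.
Proof.
move=> per t; rewrite {1}(divn_eq t n) addnC per_mul //.
Qed.

Lemma ex_max (f : nat -> int) N : exists r, forall k, (k <= N)%N -> f k <= f r.
Proof.
elim: N => [|N [r Hr]]; first by exists 0%N => k; rewrite leqn0 => /eqP->.
have [le|lt] := lerP (f N.+1) (f r).
  exists r => k; rewrite leq_eqVlt ltnS => /orP[/eqP->//|]; exact: Hr.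
exists N.+1 => k; rewrite leq_eqVlt ltnS => /orP[/eqP->//|/Hr h].
exact: le_trans h (ltW lt).
Qed.

Lemma key_max (A D : nat -> int) n (c : int) : (0 < n)%N ->
  (forall t, A (t + n)%N = A t) ->
  (forall t, D t.+1 = (c + 1) * A t.+1 - c * A t) ->
  (forall t, D t <= c) -> 0 <= c ->
  forall r p, (forall t, A t <= A r) -> A p < A r -> A r <= 0.
Proof.
move=> n0 per rel bnd c0 r p Amax Apr.
have ex: exists t, (p < t)%N && (A t == A r).
  exists (r + p.+1 * n)%N; rewrite per_mul // eqxx andbT; nia.
case: (ex_minnP ex) => t /andP [pt /eqP Atr] tmin.
have At1 : A t.-1 < A r.
  have [->|ne] := eqVneq t.-1 p; first done.
  have pt1 : (p < t.-1)%N by lia.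
  rewrite lt_neqAle Amax andbT; apply/negP => /eqP e.
  have := tmin t.-1; rewrite pt1 e eqxx => /(_ isT); lia.
have := rel t.-1; rewrite prednK; last by lia.
have := bnd t.
have h : c * A t.-1 <= c * (A r - 1) by apply: ler_wpM2l => //; lia.
rewrite Atr. lia.
Qed.

Lemma const_A (A D : nat -> int) n (c : int) : (0 < n)%N ->
  (forall t, A (t + n)%N = A t) ->
  (forall t, D t.+1 = (c + 1) * A t.+1 - c * A t) ->
  (forall t, - c <= D t <= c) -> 0 <= c -> forall t, A t = A 0%N.
Proof.
move=> n0 per rel bnd c0.
have glob : forall f : nat -> int, (forall t, f (t + n)%N = f t) ->
    exists r, forall t, f t <= f r.
  move=> f pf; have [r Hr] := ex_max f n.-1; exists r => t.
  rewrite (@per_mod f n pf); apply: Hr; have := ltn_pmod t n0; lia.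
have [r Hr] := glob A per.
have [s Hs] := glob (fun t => - A t) (fun t => f_equal -%R (per t)).
have [lt|ge] := ltP (A s) (A r).
  have h1 := @key_max A D n c n0 per rel (fun t => proj2 (andP (bnd t))) c0 r s Hr lt.
  have h2 : - A s <= 0.
    apply: (@key_max (fun t => - A t) (fun t => - D t) n c n0 _ _ _ _ s r).
    - by move=> t; rewrite per.
    - by move=> t; rewrite rel; ring.
    - by move=> t; have := bnd t; lia.
    - exact: c0.
    - exact: Hs.
    - lia.
  lia.
have e : forall t, A t = A r by move=> t; have := Hr t; have := Hs t; lia.
by move=> t; rewrite !e.
Qed.
Definition Bf (D : nat -> int) (n : nat) (l c : int) (k : nat) : int :=
  \sum_(j < n) D (k.+1 + j)%N * l ^+ j * c ^+ (n.-1 - j).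

Lemma B_rel (D : nat -> int) n (l c : int) : (0 < n)%N ->
  (forall t, D (t + n)%N = D t) ->
  forall k, l * Bf D n l c k.+1 - c * Bf D n l c k = (l ^+ n - c ^+ n) * D k.+1.
Proof.
move=> n0 per k.
pose F (j : nat) := D (k.+1 + j)%N * l ^+ j * c ^+ (n - j).
have e1 : l * Bf D n l c k.+1 = \sum_(j < n) F j.+1.
  rewrite /Bf mulr_sumr; apply: eq_bigr => j _; rewrite /F addSnnS.
  have -> : (n.-1 - j = n - j.+1)%N by lia.
  by rewrite exprS; ring.
have e2 : c * Bf D n l c k = \sum_(j < n) F j.
  rewrite /Bf mulr_sumr; apply: eq_bigr => j _; rewrite /F.
  have -> : (n - j = (n.-1 - j).+1)%N by have := ltn_ord j; lia.
  by rewrite exprS; ring.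
have e3 : \sum_(j < n.+1) F j = F 0%N + \sum_(j < n) F j.+1 by rewrite big_ord_recl.
have e4 : \sum_(j < n.+1) F j = \sum_(j < n) F j + F n by rewrite big_ord_recr.
rewrite e1 e2.
have -> : \sum_(j < n) F j.+1 = \sum_(j < n) F j + F n - F 0%N.
  by rewrite -e4 e3; ring.
rewrite /F addn0 per subnn expr0 subn0; ring.
Qed.

Lemma B_per (D : nat -> int) n (l c : int) :
  (forall t, D (t + n)%N = D t) ->
  forall k, Bf D n l c (k + n)%N = Bf D n l c k.
Proof.
move=> per k; rewrite /Bf; apply: eq_bigr => j _.
by rewrite -addSn -addnA (addnC n) addnA per.
Qed.

Lemma Zm_dvd (m : nat) (W : int) : (1 < m)%N -> (W%:~R : 'Z_m) = 0 -> (m%:Z %| W)%Z.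
Proof.
move=> m1; case: W => k /=.
  move=> /(congr1 val); rewrite /= val_Zp_nat // => hk.
  by rewrite /dvdz /= /dvdn; apply/eqP; move: hk => /=; rewrite ?absz_nat => ->.
rewrite NegzE mulrNz => /eqP; rewrite oppr_eq0 => /eqP.
move=> /(congr1 val); rewrite /= val_Zp_nat // => hk.
by rewrite dvdzE abszN /= /dvdn; apply/eqP; move: hk => /=; rewrite ?absz_nat => ->.
Qed.

Lemma auxpow (a b : int) p : a ^+ p.+1 - b ^+ p.+1 = (- b ^+ p) * b + a ^+ p.+1.
Proof. rewrite !exprSr; ring. Qed.

Lemma PoszX (a k : nat) : ((a ^ k)%N : int) = (a : int) ^+ k.
Proof. by rewrite -[(a:int)]natz -natrX natz. Qed.

Theorem mainTheorem3 (n l : nat) (hn : (2 <= n)%N) (hl : (2 <= l)%N) :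
  let m := (l ^ n - (l - 1) ^ n)%N in
  let alpha : 'Z_m := (l%:R : 'Z_m) * ((l - 1)%N%:R : 'Z_m)^-1 in
  splits (chair (fun _ : 'I_n => (l%:Z)) (fun _ : 'I_n => ((l - 1)%N)%:Z))
         (fun i : 'I_n => alpha ^+ (val i)).
Proof.
move=> m alpha X Y [HX [j Hj]] [HY [j' Hj']] Hdot i.
move: Hj Hj' HX HY Hdot; rewrite /alpha /m; clear alpha m.
set c := (l - 1)%N => Hj Hj' HX HY Hdot.
have lc : l = c.+1 by rewrite /c; lia.
have n0 : (0 < n)%N by lia.
have [p np] : exists p, n = p.+1 by exists n.-1; lia.
have p0 : (0 < p)%N by lia.
have hLC : (c ^ p <= l ^ p)%N by rewrite leq_exp2r // lc.
have hL : (l <= l ^ p)%N by rewrite -{1}(expn1 l) leq_pexp2l //; lia.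
have hLCn : (c ^ n <= l ^ n)%N by rewrite leq_exp2r // lc.
set m := (l ^ n - c ^ n)%N in Hdot *.
have m1 : (1 < m)%N by rewrite /m np !expnS; nia.
set lZ := (l : int). set cZ := (c : int).
have lcZ : lZ = cZ + 1 by rewrite /lZ /cZ lc -addn1 PoszD.
have c0 : 0 <= cZ by [].
have mZ : (m : int) = lZ ^+ n - cZ ^+ n by rewrite /m -subzn // !PoszX.
have copZ : coprimez cZ (m : int).
  rewrite /coprimez mZ.
  have -> : lZ ^+ n - cZ ^+ n = (- cZ ^+ p) * cZ + lZ ^+ n.
    by rewrite np auxpow.
  rewrite gcdzMDl -/(coprimez cZ (lZ ^+ n)); apply: coprimezXr.
  by apply/coprimezP; exists (-1, 1); rewrite lcZ /=; ring.
have cop : coprime m c.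
  by rewrite coprime_sym; move: copZ; rewrite coprimezE !absz_nat.
have uc : ((c%:R : 'Z_m) \is a GRing.unit) by rewrite unitZpE.
have cu : (c%:R : 'Z_m) * (c%:R)^-1 = 1 by rewrite mulrV.
pose ordm (t : nat) : 'I_n := Ordinal (ltn_pmod t n0).
pose D (t : nat) : int := X (ordm t) - Y (ordm t).
have Dper : forall t, D (t + n)%N = D t.
  move=> t; rewrite /D; have -> // : ordm (t + n)%N = ordm t.
  by apply: val_inj; rewrite /= modnDr.
have Dord : forall k : 'I_n, D k = X k - Y k.
  by move=> k; rewrite /D; have -> // : ordm k = k; apply: val_inj; rewrite /= modn_small.
have Dbnd : forall t, - cZ <= D t <= cZ.
  move=> t; rewrite /D; have := HX (ordm t); have := HY (ordm t).
  rewrite -/lZ lcZ; lia.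
have B0 : ((m : int) %| Bf D n lZ cZ n.-1)%Z.
  apply: Zm_dvd m1 _.
  have eB : Bf D n lZ cZ n.-1 = \sum_(k < n) (X k - Y k) * lZ ^+ k * cZ ^+ (n.-1 - k).
    rewrite /Bf; apply: eq_bigr => k _.
    have -> : (n.-1.+1 + k = k + n)%N by lia.
    by rewrite Dper Dord.
  rewrite /dotG in Hdot.
  have H0 : \sum_(k < n) ((l%:R : 'Z_m) * (c%:R)^-1) ^+ k *~ (X k - Y k) = 0.
    rewrite (eq_bigr (fun k : 'I_n => ((l%:R : 'Z_m) * (c%:R)^-1) ^+ k *~ X k
                   - ((l%:R : 'Z_m) * (c%:R)^-1) ^+ k *~ Y k)).
      by rewrite sumrB Hdot subrr.
    by move=> k _; rewrite mulrzBr.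
  rewrite eB rmorph_sum /=.
  transitivity ((c%:R : 'Z_m) ^+ n.-1 *
     \sum_(k < n) ((l%:R : 'Z_m) * (c%:R)^-1) ^+ k *~ (X k - Y k)); last by rewrite H0 mulr0.
  rewrite mulr_sumr; apply: eq_bigr => k _.
  have hk : (k <= n.-1)%N by have := ltn_ord k; lia.
  set d := X k - Y k.
  have cuk : (c%:R : 'Z_m) ^+ k * (c%:R)^-1 ^+ k = 1 by rewrite -exprMn cu expr1n.
  rewrite !intrM !rmorphXn /= -mulrzr exprMn.
  rewrite -{2}(subnK hk) exprD.
  set u := (c%:R : 'Z_m)^-1 ^+ k in cuk *.
  set v := (c%:R : 'Z_m) ^+ k in cuk *.
  transitivity ((d%:~R * lZ%:~R ^+ k * cZ%:~R ^+ (n.-1 - k)) * (v * u) : 'Z_m).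
    by rewrite cuk mulr1 ?mul1r.
  rewrite -mulrzr.
  change ((l:int)%:~R : 'Z_m) with (l%:R : 'Z_m).
  change ((c:int)%:~R : 'Z_m) with (c%:R : 'Z_m).
  ring.
have Bdown : forall s, (s <= n.-1)%N -> ((m : int) %| Bf D n lZ cZ (n.-1 - s))%Z.
  elim=> [|s IH] hs; first by rewrite subn0.
  have e : (n.-1 - s = (n.-1 - s.+1).+1)%N by lia.
  have := B_rel D n lZ cZ n0 Dper (n.-1 - s.+1); rewrite -e -mZ => hrel.
  have copZ2 : coprimez (m:int) cZ by rewrite coprimez_sym.
  rewrite -(Gauss_dvdzl _ copZ2).
  have -> : Bf D n lZ cZ (n.-1 - s.+1) * cZ =
     lZ * Bf D n lZ cZ (n.-1 - s) - (m : int) * D (n.-1 - s)%N.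
    by rewrite -hrel; ring.
  have h1 : ((m:int) %| lZ * Bf D n lZ cZ (n.-1 - s))%Z.
    by apply: dvdz_mull; apply: IH; lia.
  have h2 : ((m:int) %| (m:int) * D (n.-1 - s)%N)%Z by apply: dvdz_mulr.
  by rewrite rpredB.
have Ball : forall k, ((m : int) %| Bf D n lZ cZ k)%Z.
  move=> k; rewrite (@per_mod (Bf D n lZ cZ) n (B_per D n lZ cZ Dper) k).
  have hk := ltn_pmod k n0.
  have -> : (k %% n = n.-1 - (n.-1 - k %% n))%N by lia.
  by apply: Bdown; lia.
pose A k := (Bf D n lZ cZ k %/ (m : int))%Z.
have AE : forall k, Bf D n lZ cZ k = A k * (m : int) by move=> k; rewrite divzK.
have Aper : forall t, A (t + n)%N = A t by move=> t; rewrite /A B_per.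
have mnz : (m : int) != 0 by rewrite eqz_nat; lia.
have Arel : forall t, D t.+1 = (cZ + 1) * A t.+1 - cZ * A t.
  move=> t; have := B_rel D n lZ cZ n0 Dper t; rewrite !AE -mZ lcZ => h.
  by apply: (mulfI mnz); rewrite -h; ring.
have Aconst := @const_A A D n cZ n0 Aper Arel Dbnd c0.
have Dc : forall t, D t = A 0%N.
  move=> t; rewrite -Dper (_ : (t + n = (t + n.-1).+1)%N); last by lia.
  by rewrite Arel !Aconst; ring.
have := Dc j; have := Dc j'; have := Dc i; rewrite !Dord.
have := HX j; have := HY j'; have := HX j'; have := HY j.
move: Hj Hj'; rewrite -/lZ -/cZ lcZ; lia.
Qed.
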